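(* Let $G$ be a digraph with a fixed upward planar drawing, let $s,t\in V(G)$ and let $P$ be a directed path from $s$ to $t$ in $G$. If $P'$ is a directed $s$-$t$ path with $P'\cap\mathrm{Right}(P)\neq\emptyset$, then there is a directed $s$-$t$ path $Q$ such that $Q\subseteq P\cup\mathrm{Right}(P)$ and $Q\cap\mathrm{Right}(P)\neq\emptyset$.
   Context: An upward planar drawing of a digraph is a plane drawing (no edge crossings) in which every directed edge is a curve monotone increasing in the $y$-direction from tail to head. A path is identified with the set of points of $\mathbb{R}^2$ in its drawing. For a path $P$ with endpoints $(x,y)$, $(x',y')$, $y\le y'$, let $\mathrm{Right}(P):=\{(u,v)\in\mathbb{R}^2: y\le v\le y',\ u'<u \text{ for all } u' \text{ with } (u',v)\in P\}$. *)

(* Defs.v *)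
From Stdlib Require Import Reals List.
Import ListNotations.
Set Implicit Arguments.
Open Scope R_scope.

Record digraph := {
  vert : Type;
  edge : Type;
  tail : edge -> vert;
  head : edge -> vert;
  vert_fin : exists l : list vert, forall v, In v l;
  edge_fin : exists l : list edge, forall e, In e l }.

Arguments tail {d} e.
Arguments head {d} e.

Definition point := (R * R)%type.

Definition cont01 (f : R -> point) : Prop :=
  forall t, 0 <= t <= 1 -> forall eps, 0 < eps -> exists delta, 0 < delta /\
    forall t', 0 <= t' <= 1 -> Rabs (t' - t) < delta ->
      Rabs (fst (f t') - fst (f t)) < eps /\ Rabs (snd (f t') - snd (f t)) < eps.

Record upward_planar_drawing (G : digraph) := {
  vpos : vert G -> point;
  ecurve : edge G -> R -> point;
  vpos_inj : forall v w, vpos v = vpos w -> v = w;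
  ecurve_cont : forall e, cont01 (ecurve e);
  ecurve_tail : forall e, ecurve e 0 = vpos (tail e);
  ecurve_head : forall e, ecurve e 1 = vpos (head e);
  ecurve_upward : forall e a b, 0 <= a -> a < b -> b <= 1 ->
    snd (ecurve e a) < snd (ecurve e b);
  ecurve_avoid_vertices : forall e t v, 0 < t < 1 -> ecurve e t <> vpos v;
  ecurve_noncrossing : forall e e' a b, e <> e' -> 0 <= a <= 1 -> 0 <= b <= 1 ->
    ecurve e a = ecurve e' b -> exists v, ecurve e a = vpos v }.

Fixpoint is_walk (G : digraph) (s : vert G) (es : list (edge G)) (t : vert G) : Prop :=
  match es with
  | [] => s = t
  | e :: es' => tail e = s /\ @is_walk G (head e) es' t
  end.

Definition walk_verts (G : digraph) (s : vert G) (es : list (edge G)) : list (vert G) :=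
  s :: map (@head G) es.

Definition dipath (G : digraph) (s t : vert G) (es : list (edge G)) : Prop :=
  @is_walk G s es t /\ NoDup (@walk_verts G s es).

Definition path_points (G : digraph) (D : upward_planar_drawing G)
  (s : vert G) (es : list (edge G)) (p : point) : Prop :=
  p = vpos D s \/
  exists e, In e es /\ exists a, 0 <= a <= 1 /\ p = ecurve D e a.

Definition RightOf (G : digraph) (D : upward_planar_drawing G)
  (s t : vert G) (es : list (edge G)) (p : point) : Prop :=
  Rmin (snd (vpos D s)) (snd (vpos D t)) <= snd p <=
    Rmax (snd (vpos D s)) (snd (vpos D t)) /\
  forall u', path_points D s es (u', snd p) -> u' < fst p.

Arguments is_walk {G} s es t.
Arguments walk_verts {G} s es.
Arguments dipath {G} s t es.

(* Main.v *)
Require Import Defs.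
From Stdlib Require Import Reals List.
From Stdlib Require Import Lra Lia Ranalysis5 ClassicalEpsilon Classical.
Require Import Defs.
Import ListNotations.
Open Scope R_scope.

Definition clamp (t : R) : R :=
  if Rle_dec t 0 then 0 else if Rle_dec t 1 then t else 1.

Lemma clamp_in t : 0 <= clamp t <= 1.
Proof. unfold clamp; destruct (Rle_dec t 0); [lra|destruct (Rle_dec t 1); lra]. Qed.

Lemma clamp_id t : 0 <= t <= 1 -> clamp t = t.
Proof. intros; unfold clamp; destruct (Rle_dec t 0); [lra|destruct (Rle_dec t 1); lra]. Qed.

Lemma clamp_lip x y : Rabs (clamp x - clamp y) <= Rabs (x - y).
Proof.
  unfold clamp; destruct (Rle_dec x 0); destruct (Rle_dec y 0);
  try destruct (Rle_dec x 1); try destruct (Rle_dec y 1);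
  unfold Rabs; repeat destruct Rcase_abs; lra.
Qed.

Lemma cont_clamp (f : R -> point) : cont01 f -> forall x,
  continuity_pt (fun t => fst (f (clamp t))) x /\
  continuity_pt (fun t => snd (f (clamp t))) x.
Proof.
  intros Hf x.
  split; unfold continuity_pt, continue_in, limit1_in, limit_in; simpl; unfold Rdist;
  intros eps Heps;
  destruct (Hf (clamp x) (clamp_in x) eps Heps) as [del [Hdel H]];
  exists del; split; auto; intros x' [_ Hx'];
  (destruct (H (clamp x') (clamp_in x')) as [H1 H2];
   [pose proof (clamp_lip x' x); lra | assumption || assumption]);
  assumption.
Qed.

Definition strict_up (f : R -> point) : Prop :=
  forall a b, 0 <= a -> a < b -> b <= 1 -> snd (f a) < snd (f b).

Lemma strict_up_le f : strict_up f -> forall a b, 0 <= a -> a <= b -> b <= 1 -> snd (f a) <= snd (f b).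
Proof. intros H a b ? ? ?. destruct (Req_dec a b); [subst; lra| left; apply H; lra]. Qed.

Lemma strict_up_inv f : strict_up f -> forall a b, 0 <= a <= 1 -> 0 <= b <= 1 ->
  snd (f a) <= snd (f b) -> a <= b.
Proof. intros H a b ? ? ?. destruct (Rle_dec a b); auto. assert (snd (f b) < snd (f a)) by (apply H; lra). lra. Qed.

Lemma prod_neg1 x y : x * y < 0 -> x < 0 -> 0 < y.
Proof. intros. destruct (Rle_dec y 0); [|lra]. assert (0 <= (- x) * (- y)) by (apply Rmult_le_pos; lra). lra. Qed.

Section Cross.
Variables f g : R -> point.
Hypothesis fc : cont01 f.
Hypothesis gc : cont01 g.
Hypothesis fu : strict_up f.
Hypothesis gu : strict_up g.

Definition yF t := snd (f (clamp t)) + (t - clamp t).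

Lemma yF_incr a b : a < b -> yF a < yF b.
Proof.
  intros Hab. unfold yF.
  assert (Hc: clamp a <= clamp b /\ (clamp a = clamp b \/ clamp a < clamp b) /\ (a - clamp a) <= (b - clamp b)).
  { unfold clamp; destruct (Rle_dec a 0); destruct (Rle_dec b 0);
    try destruct (Rle_dec a 1); try destruct (Rle_dec b 1); lra. }
  destruct Hc as [H1 [[H2|H2] H3]].
  - rewrite H2. lra.
  - pose proof (clamp_in a); pose proof (clamp_in b).
    assert (snd (f (clamp a)) < snd (f (clamp b))) by (apply fu; lra). lra.
Qed.

Lemma yF_inj a b : yF a = yF b -> a = b.
Proof. intros H. destruct (Rtotal_order a b) as [h|[h|h]]; auto;
  [pose proof (yF_incr _ _ h)|pose proof (yF_incr _ _ h)]; lra. Qed.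

Lemma yF_le a b : yF a <= yF b -> a <= b.
Proof. intros H. destruct (Rle_dec a b); auto. pose proof (yF_incr b a); lra. Qed.

Lemma yF_id t : 0 <= t <= 1 -> yF t = snd (f t).
Proof. intros. unfold yF. rewrite clamp_id; auto. lra. Qed.

Lemma yF_cont x : continuity_pt yF x.
Proof.
  unfold yF.
  apply (continuity_pt_plus (fun t => snd (f (clamp t))) (fun t => t - clamp t)).
  - apply cont_clamp; auto.
  - apply (continuity_pt_minus (fun t => t) clamp).
    + apply derivable_continuous_pt; apply derivable_pt_id.
    + unfold continuity_pt, continue_in, limit1_in, limit_in; simpl; unfold Rdist.
      intros eps Heps; exists eps; split; auto; intros x' [_ Hx'].
      pose proof (clamp_lip x' x); lra.
Qed.

Lemma yF_surj y : yF (-1) <= y <= yF 2 -> exists t, yF t = y.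
Proof.
  intros Hy. destruct (f_interv_is_interv yF (-1) 2 y ltac:(lra) Hy (fun x _ => yF_cont x)) as [t [_ Ht]].
  eauto.
Qed.

Definition phi (y : R) : R := epsilon (inhabits 0) (fun t => yF t = y).

Lemma phi_spec y : yF (-1) <= y <= yF 2 -> yF (phi y) = y.
Proof. intros Hy. unfold phi. apply (epsilon_spec (inhabits 0) (fun t => yF t = y)). apply yF_surj; auto. Qed.

Lemma phi_cont b : yF (-1) < b < yF 2 -> continuity_pt phi b.
Proof.
  intros Hb.
  apply (continuity_pt_recip_interv yF phi (-1) 2 ltac:(lra)); auto.
  - intros x y _ Hxy _. apply yF_incr; auto.
  - intros x H1 H2. unfold comp, id. apply phi_spec; lra.
  - intros x H1 H2. pose proof (phi_spec x (conj H1 H2)).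
    split; apply yF_le; lra.
  - intros; apply yF_cont.
Qed.

Lemma cross c1 c2 d1 d2 : 0 <= c1 -> c1 <= c2 -> c2 <= 1 -> 0 <= d1 <= 1 -> 0 <= d2 <= 1 ->
  snd (f d1) = snd (g c1) -> snd (f d2) = snd (g c2) ->
  (fst (f d1) - fst (g c1)) * (fst (f d2) - fst (g c2)) < 0 ->
  exists c d, c1 <= c <= c2 /\ 0 <= d <= 1 /\ g c = f d.
Proof.
  intros H0 H12 H1 Hd1 Hd2 E1 E2 Hs.
  destruct (Req_dec c1 c2) as [Ec|Nc].
  { subst c2. rewrite <- E2 in E1. assert (d1 = d2).
    { apply Rle_antisym; apply (strict_up_inv f fu); lra. }
    subst d2. pose proof (Rle_0_sqr (fst (f d1) - fst (g c1))). unfold Rsqr in *. lra. }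
  assert (Hd12 : d1 <= d2).
  { apply (strict_up_inv f fu); auto. rewrite E1, E2. apply strict_up_le; auto; lra. }
  set (h := fun c => fst (g (clamp c)) - fst (f (clamp (phi (snd (g (clamp c))))))).
  assert (Hrange : forall c, c1 <= c <= c2 -> snd (f d1) <= snd (g c) <= snd (f d2)).
  { intros c Hc. rewrite E1, E2. split; apply strict_up_le; auto; lra. }
  assert (Hf01 : snd (f 0) <= snd (f d1) /\ snd (f d2) <= snd (f 1)).
  { split; apply strict_up_le; auto; lra. }
  assert (Hy1 : yF (-1) = snd (f 0) - 1).
  { unfold yF. unfold clamp. destruct (Rle_dec (-1) 0); lra. }
  assert (Hy2 : yF 2 = snd (f 1) + 1).
  { unfold yF. unfold clamp. destruct (Rle_dec 2 0); [lra|]. destruct (Rle_dec 2 1); lra. }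
  assert (Hphi : forall c, c1 <= c <= c2 -> d1 <= phi (snd (g c)) <= d2 /\
      snd (f (phi (snd (g c)))) = snd (g c)).
  { intros c Hc. specialize (Hrange c Hc).
    assert (Hp := phi_spec (snd (g c)) ltac:(lra)).
    assert (d1 <= phi (snd (g c)) <= d2).
    { split; apply yF_le; rewrite ?Hp, yF_id; lra. }
    split; auto. rewrite <- yF_id by lra. auto. }
  assert (Hcont : forall c, c1 <= c <= c2 -> continuity_pt h c).
  { intros c Hc. unfold h.
    apply (continuity_pt_minus (fun c => fst (g (clamp c))) (fun c => fst (f (clamp (phi (snd (g (clamp c)))))))).
    - apply cont_clamp; auto.
    - change (continuity_pt (comp (fun t => fst (f (clamp t))) (comp phi (fun c => snd (g (clamp c))))) c).
      apply continuity_pt_comp.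
      + apply continuity_pt_comp.
        * apply cont_clamp; auto.
        * apply phi_cont. rewrite clamp_id by lra. specialize (Hrange c Hc). lra.
      + apply cont_clamp; auto. }
  assert (Hh : forall c, c1 <= c <= c2 -> h c = fst (g c) - fst (f (phi (snd (g c))))).
  { intros c Hc. unfold h. destruct (Hphi c Hc) as [Hp _].
    rewrite (clamp_id c) by lra. rewrite (clamp_id (phi _)) by lra. auto. }
  assert (Hphi1 : phi (snd (g c1)) = d1).
  { apply yF_inj. rewrite phi_spec; [|pose proof (Hrange c1 ltac:(lra)); lra].
    rewrite yF_id; lra. }
  assert (Hphi2 : phi (snd (g c2)) = d2).
  { apply yF_inj. rewrite phi_spec; [|pose proof (Hrange c2 ltac:(lra)); lra].
    rewrite yF_id; lra. }
  assert (Hz : exists z, c1 <= z <= c2 /\ h z = 0).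
  { assert (h c1 * h c2 < 0).
    { rewrite !Hh by lra. rewrite Hphi1, Hphi2.
      replace ((fst (g c1) - fst (f d1)) * (fst (g c2) - fst (f d2))) with
        ((fst (f d1) - fst (g c1)) * (fst (f d2) - fst (g c2))) by ring. lra. }
    destruct (Rlt_dec (h c1) 0).
    - assert (0 < h c2) by (apply (prod_neg1 (h c1)); auto).
      destruct (IVT_interv h c1 c2 Hcont ltac:(lra) r H2) as [z Hz]. eauto.
    - assert (0 < h c1) by (destruct (Req_dec (h c1) 0) as [E|]; [rewrite E in H; lra|lra]).
      assert (h c2 < 0) by (assert (0 < - h c2) by (apply (prod_neg1 (- h c1)); lra); lra).
      destruct (IVT_interv (fun c => - h c) c1 c2) as [z Hz]; try lra.
      + intros a Ha. apply (continuity_pt_opp h). auto.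
      + exists z. split; [tauto|]. lra. }
  destruct Hz as [z [Hz Hhz]].
  exists z, (phi (snd (g z))).
  destruct (Hphi z Hz) as [Hp Hs2].
  split; auto. split; [lra|].
  rewrite Hh in Hhz by lra.
  assert (Hx : fst (g z) = fst (f (phi (snd (g z))))) by lra.
  revert Hx Hs2. generalize (f (phi (snd (g z)))). intros [fx fy].
  destruct (g z) as [gx gy]. simpl. intros; subst; auto.
Qed.

End Cross.

Lemma count_le {E} (l : list E) (p q : E -> bool) :
  (forall x, p x = true -> q x = true) -> (length (filter p l) <= length (filter q l))%nat.
Proof.
  intros H. induction l as [|a l IH]; simpl; auto.
  destruct (p a) eqn:Ep; [rewrite (H a Ep)|destruct (q a)]; simpl; lia.
Qed.

Lemma count_lt {E} (l : list E) (p q : E -> bool) e :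
  (forall x, p x = true -> q x = true) -> In e l -> p e = false -> q e = true ->
  (length (filter p l) < length (filter q l))%nat.
Proof.
  intros H Hin Hp Hq. induction l as [|a l IH]; simpl; [destruct Hin|].
  destruct Hin as [<-|Hin].
  - rewrite Hp, Hq. simpl. pose proof (count_le l p q H). lia.
  - specialize (IH Hin). destruct (p a) eqn:Ep; [rewrite (H a Ep)|destruct (q a)]; simpl; lia.
Qed.

Lemma walk_chain (G : digraph) (s t : vert G) (P : list (edge G)) :
  is_walk s P t -> forall e, In e P -> tail e = s \/ exists e', In e' P /\ head e' = tail e.
Proof.
  revert s. induction P as [|a P IH]; intros s HW e Hin; [destruct Hin|].
  destruct HW as [Ha HW]. destruct Hin as [<-|Hin]; auto.
  destruct (IH _ HW e Hin) as [H|[e' [H1 H2]]].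
  - right. exists a. split; simpl; auto.
  - right. exists e'. split; simpl; auto.
Qed.

Lemma walk_chain' (G : digraph) (s t : vert G) (P : list (edge G)) :
  is_walk s P t -> forall e, In e P -> head e = t \/ exists e', In e' P /\ tail e' = head e.
Proof.
  revert s. induction P as [|a P IH]; intros s HW e Hin; [destruct Hin|].
  destruct HW as [Ha HW]. destruct Hin as [<-|Hin].
  - destruct P as [|b P]; simpl in HW; [auto|]. right. exists b. destruct HW. simpl; auto.
  - destruct (IH _ HW e Hin) as [H|[e' [H1 H2]]]; auto.
    right. exists e'. split; simpl; auto.
Qed.

Section Side.
Variable G : digraph.
Variable D : upward_planar_drawing G.
Variables s t : vert G.
Variable P : list (edge G).
Hypothesis HP : is_walk s P t.

Definition Ppt q := path_points D s P q.
Definition rightP (q : point) := forall u', Ppt (u', snd q) -> u' < fst q.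

Lemma ec_cont e : cont01 (ecurve D e).
Proof. apply ecurve_cont. Qed.
Lemma ec_up e : strict_up (ecurve D e).
Proof. intros a b ? ? ?. apply ecurve_upward; auto. Qed.

Lemma Ppt_pair q : Ppt (fst q, snd q) -> Ppt q.
Proof. rewrite <- surjective_pairing. auto. Qed.

Definition meas (H : R) : nat :=
  length (filter (fun e => if Rlt_dec (snd (vpos D (tail e))) H then true else false) P).

Lemma sideC (g : R -> point) (gc : cont01 g) (gu : strict_up g) c1 :
  0 <= c1 -> snd (vpos D s) <= snd (g c1) -> rightP (g c1) ->
  forall n c2 e d, (meas (snd (g c2)) < n)%nat -> c1 <= c2 <= 1 ->
  (forall c, c1 <= c <= c2 -> ~ Ppt (g c)) ->
  In e P -> 0 <= d <= 1 -> snd (ecurve D e d) = snd (g c2) -> fst (ecurve D e d) > fst (g c2) ->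
  False.
Proof.
  intros Hc1 Hs Hr n. induction n as [|n IH]; intros c2 e d Hm Hc2 Hno He Hd E1 E2; [lia|].
  assert (Hrp : forall e d, In e P -> 0 <= d <= 1 -> snd (ecurve D e d) = snd (g c1) ->
     fst (ecurve D e d) < fst (g c1)).
  { intros e0 d0 He0 Hd0 Ey. apply Hr. rewrite <- Ey.
    right. exists e0. split; auto. exists d0. split; auto. symmetry; apply surjective_pairing. }
  destruct (Req_dec c1 c2) as [Ec|Nc].
  { subst c2. specialize (Hrp e d He Hd E1). lra. }
  assert (Hlt : snd (g c1) < snd (g c2)) by (apply gu; lra).
  assert (Hw : exists e d, In e P /\ 0 < d <= 1 /\ snd (ecurve D e d) = snd (g c2) /\
     fst (ecurve D e d) > fst (g c2)).
  { destruct (Req_dec d 0) as [Ed|Nd]; [|exists e, d; repeat split; auto; lra].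
    subst d. destruct (walk_chain G s t P HP e He) as [Et|[e' [He' Eh]]].
    - exfalso. rewrite ecurve_tail, Et in E1. lra.
    - exists e', 1. rewrite ecurve_head, Eh, <- ecurve_tail. repeat split; auto; lra. }
  clear e d He Hd E1 E2. destruct Hw as [e [d [He [Hd [E1 E2]]]]].
  set (f := ecurve D e).
  assert (Y0lt : snd (f 0) < snd (f d)) by (apply ec_up; lra).
  destruct (Rle_dec (snd (f 0)) (snd (g c1))) as [Hle|Hgt].
  - destruct (f_interv_is_interv (fun t => snd (f (clamp t))) 0 d (snd (g c1)) ltac:(lra))
      as [d1 [Hd1 Ed1]].
    { rewrite !clamp_id by lra. fold f in E1. lra. }
    { intros; apply cont_clamp, ec_cont. }
    rewrite clamp_id in Ed1 by lra.
    destruct (cross f g (ec_cont e) gc (ec_up e) gu c1 c2 d1 d) as [c [d' [Hc [Hd' Eq]]]];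
      try lra; auto.
    { assert (fst (f d1) < fst (g c1)) by (apply Hrp; auto; lra).
      fold f in E2. assert (0 < fst (f d) - fst (g c2)) by lra.
      assert (fst (f d1) - fst (g c1) < 0) by lra.
      rewrite Rmult_comm. assert (0 < (fst (f d) - fst (g c2)) * - (fst (f d1) - fst (g c1))) by (apply Rmult_lt_0_compat; lra). lra. }
    apply (Hno c Hc). rewrite Eq. right. exists e. split; auto. exists d'. split; auto.
  - assert (Hg : snd (g c1) <= snd (f 0) <= snd (g c2)) by (fold f in E1; lra).
    destruct (f_interv_is_interv (fun t => snd (g (clamp t))) c1 c2 (snd (f 0)) ltac:(lra))
      as [ga [Hga Ega]].
    { rewrite !clamp_id by lra. auto. }
    { intros; apply cont_clamp; auto. }
    rewrite clamp_id in Ega by lra.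
    destruct (classic (rightP (g ga))) as [Hrg|Hnr].
    + destruct (cross f g (ec_cont e) gc (ec_up e) gu ga c2 0 d) as [c [d' [Hc [Hd' Eq]]]];
        try lra; auto.
      { assert (fst (f 0) < fst (g ga)).
        { apply Hrg. rewrite Ega. right. exists e. split; auto. exists 0. split; [lra|].
          symmetry; apply surjective_pairing. }
        fold f in E2. assert (0 < fst (f d) - fst (g c2)) by lra.
        rewrite Rmult_comm. assert (0 < (fst (f d) - fst (g c2)) * - (fst (f 0) - fst (g ga))) by (apply Rmult_lt_0_compat; lra). lra. }
      apply (Hno c ltac:(lra)). rewrite Eq. right. exists e. split; auto. exists d'. split; auto.
    + apply not_all_ex_not in Hnr. destruct Hnr as [u' Hu'].
      apply imply_to_and in Hu'. destruct Hu' as [Hpu Hnu].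
      assert (Hne : u' <> fst (g ga)).
      { intros Eu. apply (Hno ga Hga). rewrite Eu in Hpu. apply Ppt_pair; auto. }
      destruct Hpu as [Hs'|[e'' [He'' [d'' [Hd'' Eq'']]]]].
      * assert (snd (u', snd (g ga)) = snd (vpos D s)) by (rewrite Hs'; auto).
        simpl in H. unfold f in *. lra.
      * apply (IH ga e'' d''); auto.
        -- assert (meas (snd (g ga)) < meas (snd (g c2)))%nat; [|lia].
           unfold meas. apply (count_lt _ _ _ e); auto.
           ++ intros x. destruct (Rlt_dec _ (snd (g ga))); destruct (Rlt_dec _ (snd (g c2))); auto; lra.
           ++ rewrite Ega. unfold f. rewrite ecurve_tail. destruct (Rlt_dec _ _); auto; lra.
           ++ rewrite <- ecurve_tail. fold f. destruct (Rlt_dec _ _); intros; try reflexivity; try discriminate. unfold f in *; lra.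
        -- lra.
        -- intros c Hc. apply Hno. lra.
        -- rewrite <- Eq''. auto.
        -- rewrite <- Eq''. simpl. lra.
Qed.
Definition meas' (H : R) : nat :=
  length (filter (fun e => if Rlt_dec H (snd (vpos D (head e)))  then true else false) P).

Lemma sideC' (g : R -> point) (gc : cont01 g) (gu : strict_up g) c2 :
  c2 <= 1 -> snd (g c2) <= snd (vpos D t) -> rightP (g c2) ->
  forall n c1 e d, (meas' (snd (g c1)) < n)%nat -> 0 <= c1 <= c2 ->
  snd (vpos D s) <= snd (g c1) ->
  (forall c, c1 <= c <= c2 -> ~ Ppt (g c)) ->
  In e P -> 0 <= d <= 1 -> snd (ecurve D e d) = snd (g c1) -> fst (ecurve D e d) > fst (g c1) ->
  False.
Proof.
  intros Hc2 Ht Hr n. induction n as [|n IH]; intros c1 e d Hm Hc1 Hs Hno He Hd E1 E2; [lia|].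
  assert (Hrp : forall e d, In e P -> 0 <= d <= 1 -> snd (ecurve D e d) = snd (g c2) ->
     fst (ecurve D e d) < fst (g c2)).
  { intros e0 d0 He0 Hd0 Ey. apply Hr. rewrite <- Ey.
    right. exists e0. split; auto. exists d0. split; auto. symmetry; apply surjective_pairing. }
  destruct (Req_dec c1 c2) as [Ec|Nc].
  { subst c2. specialize (Hrp e d He Hd E1). lra. }
  assert (Hlt : snd (g c1) < snd (g c2)) by (apply gu; lra).
  assert (Hw : exists e d, In e P /\ 0 <= d < 1 /\ snd (ecurve D e d) = snd (g c1) /\ fst (ecurve D e d) > fst (g c1)).
  { destruct (Req_dec d 1) as [Ed|Nd]; [|exists e, d; repeat split; auto; lra].
    subst d. destruct (walk_chain' G s t P HP e He) as [Et|[e' [He' Eh]]].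
    - exfalso. rewrite ecurve_head, Et in E1. lra.
    - exists e', 0. rewrite ecurve_tail, Eh, <- ecurve_head. repeat split; auto; lra. }
  clear e d He Hd E1 E2. destruct Hw as [e [d [He [Hd [E1 E2]]]]].
  set (f := ecurve D e).
  assert (Y1lt : snd (f d) < snd (f 1)) by (apply ec_up; lra).
  destruct (Rle_dec (snd (g c2)) (snd (f 1))) as [Hle|Hgt].
  - destruct (f_interv_is_interv (fun t => snd (f (clamp t))) d 1 (snd (g c2)) ltac:(lra))
      as [d2 [Hd2 Ed2]].
    { rewrite !clamp_id by lra. fold f in E1. lra. }
    { intros; apply cont_clamp, ec_cont. }
    rewrite clamp_id in Ed2 by lra.
    destruct (cross f g (ec_cont e) gc (ec_up e) gu c1 c2 d d2) as [c [d' [Hc [Hd' Eq]]]];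
      try lra; auto.
    { assert (fst (f d2) < fst (g c2)) by (apply Hrp; auto; lra).
      fold f in E2. assert (0 < fst (f d) - fst (g c1)) by lra.
      assert (0 < (fst (f d) - fst (g c1)) * - (fst (f d2) - fst (g c2))) by (apply Rmult_lt_0_compat; lra). lra. }
    apply (Hno c Hc). rewrite Eq. right. exists e. split; auto. exists d'. split; auto.
  - assert (Hg : snd (g c1) <= snd (f 1) <= snd (g c2)) by (fold f in E1; lra).
    destruct (f_interv_is_interv (fun t => snd (g (clamp t))) c1 c2 (snd (f 1)) ltac:(lra))
      as [ga [Hga Ega]].
    { rewrite !clamp_id by lra. auto. }
    { intros; apply cont_clamp; auto. }
    rewrite clamp_id in Ega by lra.
    destruct (classic (rightP (g ga))) as [Hrg|Hnr].
    + destruct (cross f g (ec_cont e) gc (ec_up e) gu c1 ga d 1) as [c [d' [Hc [Hd' Eq]]]];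
        try lra; auto.
      { assert (fst (f 1) < fst (g ga)).
        { apply Hrg. rewrite Ega. right. exists e. split; auto. exists 1. split; [lra|].
          symmetry; apply surjective_pairing. }
        fold f in E2. assert (0 < fst (f d) - fst (g c1)) by lra.
        assert (0 < (fst (f d) - fst (g c1)) * - (fst (f 1) - fst (g ga))) by (apply Rmult_lt_0_compat; lra). lra. }
      apply (Hno c ltac:(lra)). rewrite Eq. right. exists e. split; auto. exists d'. split; auto.
    + apply not_all_ex_not in Hnr. destruct Hnr as [u' Hu'].
      apply imply_to_and in Hu'. destruct Hu' as [Hpu Hnu].
      assert (Hne : u' <> fst (g ga)).
      { intros Eu. apply (Hno ga Hga). rewrite Eu in Hpu. apply Ppt_pair; auto. }
      destruct Hpu as [Hs'|[e'' [He'' [d'' [Hd'' Eq'']]]]].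
      * assert (snd (u', snd (g ga)) = snd (vpos D s)) by (rewrite Hs'; auto).
        simpl in H. unfold f in *. lra.
      * apply (IH ga e'' d''); auto.
        -- assert (meas' (snd (g ga)) < meas' (snd (g c1)))%nat; [|lia].
           unfold meas'. apply (count_lt _ _ _ e); auto.
           ++ intros x. destruct (Rlt_dec (snd (g ga)) _); destruct (Rlt_dec (snd (g c1)) _); intros; try reflexivity; try discriminate. unfold f in *; lra.
           ++ rewrite Ega. unfold f. rewrite ecurve_head. destruct (Rlt_dec _ _); auto; lra.
           ++ rewrite <- ecurve_head. fold f. destruct (Rlt_dec _ _); intros; try reflexivity; try discriminate. unfold f in *; lra.
        -- lra.
        -- unfold f in *; lra.
        -- intros c Hc. apply Hno. lra.
        -- rewrite <- Eq''. auto.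
        -- rewrite <- Eq''. simpl. lra.
Qed.
End Side.

Section Walks.
Variable G : digraph.
Variable D : upward_planar_drawing G.

Lemma walk_app (x y z : vert G) A B : is_walk x A y -> is_walk y B z -> is_walk x (A ++ B) z.
Proof. revert x. induction A as [|e A IH]; simpl; intros x H1 H2; [subst; auto|]. destruct H1; split; eauto. Qed.

Lemma walk_split (x z : vert G) A B : is_walk x (A ++ B) z -> exists y, is_walk x A y /\ is_walk y B z.
Proof. revert x. induction A as [|e A IH]; simpl; intros x H; [exists x; auto|].
  destruct H as [H1 H2]. destruct (IH _ H2) as [y [Hy1 Hy2]]. exists y; split; auto. Qed.

Lemma verts_app (x : vert G) A B : walk_verts x (A ++ B) = walk_verts x A ++ map (@head G) B.
Proof. unfold walk_verts. rewrite map_app. reflexivity. Qed.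

Lemma split_at_vert (x z v : vert G) es : is_walk x es z -> In v (walk_verts x es) ->
  exists L1 L2, es = L1 ++ L2 /\ is_walk x L1 v /\ is_walk v L2 z.
Proof.
  revert x. induction es as [|e es IH]; intros x HW Hin; simpl in *.
  - destruct Hin as [<-|[]]. exists [], []. simpl; auto.
  - destruct HW as [Ht HW]. destruct Hin as [<-|Hin].
    + exists [], (e :: es). simpl; auto.
    + destruct (IH (head e) HW Hin) as [L1 [L2 [E [H1 H2]]]].
      exists (e :: L1), L2. subst. simpl; auto.
Qed.

Lemma tail_head_h e : snd (vpos D (tail e)) < snd (vpos D (head e)).
Proof. rewrite <- ecurve_tail, <- ecurve_head. apply ecurve_upward; lra. Qed.

Lemma edge_pt_h e a : 0 <= a <= 1 ->
  snd (vpos D (tail e)) <= snd (ecurve D e a) <= snd (vpos D (head e)).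
Proof. intros. rewrite <- ecurve_tail, <- ecurve_head.
  split; apply (strict_up_le _ (ec_up G D e)); lra. Qed.

Lemma walk_h (x y : vert G) es : is_walk x es y ->
  snd (vpos D x) <= snd (vpos D y) /\
  forall e, In e es -> snd (vpos D x) <= snd (vpos D (tail e)) /\ snd (vpos D (head e)) <= snd (vpos D y).
Proof.
  revert x. induction es as [|e es IH]; simpl; intros x HW.
  - subst. split; [lra|tauto].
  - destruct HW as [Ht HW]. destruct (IH _ HW) as [H1 H2]. pose proof (tail_head_h e). subst x.
    split; [lra|]. intros e' [<-|Hin]; [lra|]. specialize (H2 e' Hin). lra.
Qed.

Lemma walk_pt_h (x y : vert G) es e a : is_walk x es y -> In e es -> 0 <= a <= 1 ->
  snd (vpos D x) <= snd (ecurve D e a) <= snd (vpos D y).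
Proof. intros HW Hin Ha. destruct (walk_h x y es HW) as [_ H]. specialize (H e Hin).
  pose proof (edge_pt_h e a Ha). lra. Qed.

Lemma walk_head_gt (x y : vert G) es e : is_walk x es y -> In e es ->
  snd (vpos D x) < snd (vpos D (head e)).
Proof. intros HW Hin. destruct (walk_h x y es HW) as [_ H]. specialize (H e Hin).
  pose proof (tail_head_h e). lra. Qed.

Lemma walk_edge_verts (x y : vert G) es e : is_walk x es y -> In e es ->
  In (tail e) (walk_verts x es) /\ In (head e) (walk_verts x es).
Proof.
  revert x. induction es as [|e' es IH]; simpl; intros x HW Hin; [destruct Hin|].
  destruct HW as [Ht HW]. destruct Hin as [<-|Hin].
  - split; auto.
  - destruct (IH _ HW Hin) as [H1 H2]. unfold walk_verts in *. simpl in *. tauto.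
Qed.

Lemma walk_last_in (x y : vert G) es : is_walk x es y -> In y (walk_verts x es).
Proof.
  revert x. induction es as [|e es IH]; simpl; intros x HW; [subst; auto|].
  destruct HW as [_ HW]. specialize (IH _ HW). unfold walk_verts in *. simpl in *. tauto.
Qed.

End Walks.

Section Main.
Variable G : digraph.
Variable D : upward_planar_drawing G.
Variables s t : vert G.
Variable P : list (edge G).
Hypothesis HP : is_walk s P t.

Notation Ppt := (Ppt G D s P).
Notation rightP := (rightP G D s P).
Definition onP v := In v (walk_verts s P).

Lemma hst : snd (vpos D s) <= snd (vpos D t).
Proof. apply (walk_h G D s t P HP). Qed.

Lemma Ppt_vert v : Ppt (vpos D v) <-> onP v.
Proof.
  split.
  - intros [H|[e [He [a [Ha H]]]]].
    + apply vpos_inj in H. subst. left. auto.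
    + destruct (Req_dec a 0) as [->|N0].
      * rewrite ecurve_tail in H. apply vpos_inj in H. subst. apply (walk_edge_verts G s t P e HP He).
      * destruct (Req_dec a 1) as [->|N1].
        -- rewrite ecurve_head in H. apply vpos_inj in H. subst. apply (walk_edge_verts G s t P e HP He).
        -- exfalso. apply (@ecurve_avoid_vertices G D e a v); auto. lra.
  - unfold onP, walk_verts. intros [<-|Hin]; [left; auto|].
    apply in_map_iff in Hin. destruct Hin as [e [<- He]].
    right. exists e. split; auto. exists 1. split; [lra|]. rewrite ecurve_head. auto.
Qed.

Lemma Ppt_cases q : Ppt q -> (q = vpos D s /\ P = []) \/
  exists e a, In e P /\ 0 <= a <= 1 /\ q = ecurve D e a.
Proof.
  intros [H|[e [He [a [Ha H]]]]].
  - destruct P as [|e P'] eqn:EP; [left; auto|]. right. exists e, 0.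
    destruct HP as [Ht _]. split; [left; auto|]. split; [lra|]. rewrite ecurve_tail, Ht. auto.
  - right. eauto.
Qed.

Lemma inP_tail e : In e P -> onP (tail e).
Proof. intros. apply (walk_edge_verts G s t P e HP); auto. Qed.
Lemma inP_head e : In e P -> onP (head e).
Proof. intros. apply (walk_edge_verts G s t P e HP); auto. Qed.

Lemma interior_noP e a : ~ In e P -> 0 < a < 1 -> ~ Ppt (ecurve D e a).
Proof.
  intros HnP Ha [H|[e' [He' [b [Hb H]]]]].
  - apply (@ecurve_avoid_vertices G D e a s); auto.
  - assert (e <> e') by (intro; subst; auto).
    destruct (@ecurve_noncrossing G D e e' a b) as [v Hv]; auto; try lra.
    apply (@ecurve_avoid_vertices G D e a v); auto.
Qed.

Lemma seg_noP e c1 c2 : ~ In e P -> 0 <= c1 -> c2 <= 1 ->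
  ~ Ppt (ecurve D e c1) -> ~ Ppt (ecurve D e c2) ->
  forall c, c1 <= c <= c2 -> ~ Ppt (ecurve D e c).
Proof.
  intros HnP H1 H2 N1 N2 c Hc.
  destruct (Req_dec c c1) as [->|]; auto. destruct (Req_dec c c2) as [->|]; auto.
  apply interior_noP; auto. lra.
Qed.

Lemma rightP_noP q : rightP q -> ~ Ppt q.
Proof. intros Hr Hp. specialize (Hr (fst q)). rewrite <- surjective_pairing in Hr. specialize (Hr Hp). lra. Qed.

Definition in_range (q : point) := snd (vpos D s) <= snd q <= snd (vpos D t).

Lemma not_right q : in_range q -> ~ Ppt q -> ~ rightP q ->
  (snd q = snd (vpos D s) /\ P = []) \/
  exists e b, In e P /\ 0 <= b <= 1 /\ snd (ecurve D e b) = snd q /\ fst (ecurve D e b) > fst q.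
Proof.
  intros Hrg HnP Hn.
  apply not_all_ex_not in Hn. destruct Hn as [u' Hu'].
  apply imply_to_and in Hu'. destruct Hu' as [Hpu Hnu].
  assert (Hne : u' <> fst q).
  { intros Eu. apply HnP. rewrite Eu in Hpu. rewrite <- surjective_pairing in Hpu. auto. }
  destruct (Ppt_cases _ Hpu) as [[E1 E2]|[e [b [He [Hb Eq]]]]].
  - left. split; auto. rewrite <- E1. auto.
  - right. exists e, b. rewrite <- Eq. simpl. repeat split; auto; lra.
Qed.

Lemma edge_up e a0 : ~ In e P -> 0 <= a0 <= 1 -> rightP (ecurve D e a0) ->
  (forall a, 0 <= a <= 1 -> in_range (ecurve D e a)) ->
  forall a, a0 <= a <= 1 -> Ppt (ecurve D e a) \/ rightP (ecurve D e a).
Proof.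
  intros HnP Ha0 Hr Hrg a Ha.
  destruct (classic (Ppt (ecurve D e a))) as [|HnPa]; [left; auto|right].
  destruct (classic (rightP (ecurve D e a))) as [|Hn]; auto. exfalso.
  destruct (not_right _ (Hrg a ltac:(lra)) HnPa Hn) as [[E1 E2]|[e' [b [He' [Hb [E1 E2]]]]]].
  - assert (a0 = a).
    { apply Rle_antisym; [lra|]. apply (strict_up_inv _ (ec_up G D e)); try lra.
      pose proof (Hrg a0 Ha0) as [H1 H2]. lra. }
    subst. auto.
  - apply (sideC G D s t P HP (ecurve D e) (ec_cont G D e) (ec_up G D e) a0 ltac:(lra)
      (proj1 (Hrg a0 Ha0)) Hr (S (meas G D P (snd (ecurve D e a)))) a e' b); auto; try lra.
    apply seg_noP; auto; try lra. apply rightP_noP; auto.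
Qed.

Lemma edge_down e a0 : ~ In e P -> 0 <= a0 <= 1 -> rightP (ecurve D e a0) ->
  (forall a, 0 <= a <= 1 -> in_range (ecurve D e a)) ->
  forall a, 0 <= a <= a0 -> Ppt (ecurve D e a) \/ rightP (ecurve D e a).
Proof.
  intros HnP Ha0 Hr Hrg a Ha.
  destruct (classic (Ppt (ecurve D e a))) as [|HnPa]; [left; auto|right].
  destruct (classic (rightP (ecurve D e a))) as [|Hn]; auto. exfalso.
  destruct (not_right _ (Hrg a ltac:(lra)) HnPa Hn) as [[E1 E2]|[e' [b [He' [Hb [E1 E2]]]]]].
  - assert (a = a0).
    { apply Rle_antisym; [lra|]. apply (strict_up_inv _ (ec_up G D e)); try lra.
      pose proof (Hrg a0 Ha0) as [H1 H2]. assert (Est : s = t) by (subst P; exact HP). rewrite <- Est in H2. lra. }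
    subst. auto.
  - apply (sideC' G D s t P HP (ecurve D e) (ec_cont G D e) (ec_up G D e) a0 ltac:(lra)
      (proj2 (Hrg a0 Ha0)) Hr (S (meas' G D P (snd (ecurve D e a)))) a e' b); auto; try lra.
    + apply (Hrg a). lra.
    + apply seg_noP; auto; try lra. apply rightP_noP; auto.
Qed.

Definition good (q : point) := Ppt q \/ rightP q.

Lemma walk_up es : forall y w, is_walk y es w -> (forall e, In e es -> ~ onP (tail e)) ->
  good (vpos D y) ->
  (forall e a, In e es -> 0 <= a <= 1 -> in_range (ecurve D e a)) ->
  forall e a, In e es -> 0 <= a <= 1 -> good (ecurve D e a).
Proof.
  induction es as [|e es IH]; intros y w HW Ht Hy Hrg e' a Hin Ha; [destruct Hin|].
  destruct HW as [Hte HW].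
  assert (HnP : ~ In e P) by (intro H; apply (Ht e (or_introl eq_refl)); apply inP_tail; auto).
  assert (Hr0 : rightP (ecurve D e 0)).
  { rewrite ecurve_tail, Hte. destruct Hy as [Hy|Hy]; auto. exfalso.
    apply (Ht e (or_introl eq_refl)). rewrite Hte. apply Ppt_vert; auto. }
  assert (He : forall a, 0 <= a <= 1 -> good (ecurve D e a)).
  { intros a' Ha'. apply (edge_up e 0); auto; try lra. intros; apply Hrg; simpl; auto. }
  destruct Hin as [<-|Hin]; auto.
  apply (IH (head e) w HW); auto.
  - intros; apply Ht; simpl; auto.
  - rewrite <- ecurve_head. apply He. lra.
  - intros; apply Hrg; simpl; auto.
Qed.

Lemma walk_down es : forall u x, is_walk u es x -> (forall e, In e es -> ~ onP (head e)) ->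
  good (vpos D x) ->
  (forall e a, In e es -> 0 <= a <= 1 -> in_range (ecurve D e a)) ->
  forall e a, In e es -> 0 <= a <= 1 -> good (ecurve D e a).
Proof.
  induction es as [|e es IH]; intros u x HW Hh Hx Hrg e' a Hin Ha; [destruct Hin|].
  destruct HW as [Hte HW].
  assert (IH' : forall e a, In e es -> 0 <= a <= 1 -> good (ecurve D e a)).
  { apply (IH (head e) x HW); auto; intros; [apply Hh|apply Hrg]; simpl; auto. }
  assert (HnP : ~ In e P) by (intro H; apply (Hh e (or_introl eq_refl)); apply inP_head; auto).
  assert (Hgh : good (vpos D (head e))).
  { destruct es as [|e2 es'].
    - simpl in HW. rewrite HW. auto.
    - destruct HW as [Ht2 _]. rewrite <- Ht2, <- ecurve_tail. apply IH'; simpl; auto; lra. }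
  assert (Hr1 : rightP (ecurve D e 1)).
  { rewrite ecurve_head. destruct Hgh as [Hy|Hy]; auto. exfalso.
    apply (Hh e (or_introl eq_refl)). apply Ppt_vert; auto. }
  destruct Hin as [<-|Hin]; auto.
  apply (edge_down e 1); auto; try lra. intros; apply Hrg; simpl; auto.
Qed.

Lemma bw es : forall y x, is_walk y es x -> exists A S1 u, es = A ++ S1 /\ is_walk y A u /\
  is_walk u S1 x /\ (onP u \/ (A = [] /\ u = y)) /\ (forall e, In e S1 -> ~ onP (head e)).
Proof.
  induction es as [|e es IH]; intros y x HW.
  - exists [], [], y. simpl in *. repeat split; auto; try (intros ? []).
  - destruct HW as [Ht HW]. destruct (IH _ _ HW) as [A' [S1' [u' [E [H1 [H2 [H3 H4]]]]]]].
    destruct H3 as [H3|[EA Eu]].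
    + exists (e :: A'), S1', u'. subst. repeat split; auto.
    + subst A' u'. simpl in E. subst es.
      destruct (classic (onP (head e))) as [Ho|Hno].
      * exists [e], S1', (head e). simpl. repeat split; auto.
      * exists [], (e :: S1'), y. simpl. repeat split; auto.
        intros e1 [<-|Hin]; auto.
Qed.

Lemma fw es : forall y, is_walk y es t -> exists S2 B w, es = S2 ++ B /\ is_walk y S2 w /\
  is_walk w B t /\ onP w /\ (forall e, In e S2 -> ~ onP (tail e)).
Proof.
  induction es as [|e es IH]; intros y HW.
  - simpl in HW. subst y. exists [], [], t. simpl. repeat split; auto; try (intros ? []).
    apply (walk_last_in G s t P HP).
  - destruct (classic (onP y)) as [Ho|Hno].
    + exists [], (e :: es), y. simpl. repeat split; auto; try (intros ? []); apply HW.
    + destruct HW as [Ht HW]. destruct (IH _ HW) as [S2 [B [w [E [H1 [H2 [H3 H4]]]]]]].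
      exists (e :: S2), B, w. subst. simpl. repeat split; auto.
      intros e' [<-|Hin]; auto.
Qed.

Lemma heads_cls es : forall y w, is_walk y es w -> (forall e, In e es -> ~ onP (tail e)) ->
  forall e, In e es -> head e = w \/ ~ onP (head e).
Proof.
  induction es as [|e es IH]; intros y w HW Ht e' Hin; [destruct Hin|].
  destruct HW as [Hte HW]. destruct Hin as [<-|Hin].
  - destruct es as [|e2 es']; simpl in HW; [left; auto|].
    right. destruct HW as [Ht2 _]. rewrite <- Ht2. apply Ht. simpl; auto.
  - apply (IH (head e) w HW); auto. intros; apply Ht; simpl; auto.
Qed.
End Main.

Lemma verts_le (G : digraph) (D : upward_planar_drawing G) x y es v : is_walk x es y ->
  In v (walk_verts x es) -> snd (vpos D x) <= snd (vpos D v) <= snd (vpos D y).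
Proof.
  intros HW Hin. destruct (walk_h G D x y es HW) as [H0 H].
  destruct Hin as [<-|Hin]; [lra|]. apply in_map_iff in Hin. destruct Hin as [e [<- He]].
  specialize (H e He). pose proof (tail_head_h G D e). lra.
Qed.

Theorem lemma9 (G : digraph) (D : upward_planar_drawing G) (s t : vert G)
  (P P' : list (edge G)) :
  dipath s t P -> dipath s t P' ->
  (exists p, path_points D s P' p /\ RightOf D s t P p) ->
  exists Q, dipath s t Q /\
    (forall p, path_points D s Q p -> path_points D s P p \/ RightOf D s t P p) /\
    (exists p, path_points D s Q p /\ RightOf D s t P p).
Proof.
  intros [HPw HPn] [HP'w HP'n] [p [Hp [Hrange Hright]]].
  assert (Hr : rightP G D s P p) by exact Hright.
  pose proof (hst G D s t P HPw) as Hst.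
  assert (HonPs : onP G s P s) by (left; auto).
  destruct Hp as [Ep|[e0 [He0 [a0 [Ha0 Ep]]]]].
  { exfalso. apply (rightP_noP G D s P p Hr). rewrite Ep. left; reflexivity. }
  subst p.
  assert (HnP0 : ~ In e0 P).
  { intro H. apply (rightP_noP G D s P _ Hr). right. exists e0. split; auto. exists a0; auto. }
  assert (Hrg' : forall e a, In e P' -> 0 <= a <= 1 -> in_range G D s t (ecurve D e a)).
  { intros e a He Ha. apply (walk_pt_h G D s t P' e a HP'w He Ha). }
  destruct (in_split _ _ He0) as [A0 [B0 EP']].
  rewrite EP' in HP'w. destruct (walk_split G _ _ A0 (e0 :: B0) HP'w) as [x [HA0 [Htx HB0]]].
  destruct (bw G s P A0 s x HA0) as [A [S1 [u [EA0 [HA [HS1 [Hu HS1h]]]]]]].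
  destruct (fw G s t P HPw B0 (head e0) HB0) as [S2 [B [w [EB0 [HS2 [HB [Hw HS2t]]]]]]].
  assert (HonPu : onP G s P u) by (destruct Hu as [Hu|[_ ->]]; auto).
  set (S := S1 ++ e0 :: S2).
  assert (EP'2 : P' = A ++ S ++ B).
  { rewrite EP', EA0, EB0. unfold S. rewrite <- !app_assoc. reflexivity. }
  assert (HinS : forall e, In e S -> In e P').
  { intros e He. rewrite EP'2. apply in_or_app. right. apply in_or_app. auto. }
  assert (HS : is_walk u S w).
  { unfold S. apply (walk_app G u x w); [subst x; auto|]. simpl. split; auto. }
  assert (Hg0 : forall a, 0 <= a <= 1 -> good G D s P (ecurve D e0 a)).
  { intros a Ha. destruct (Rle_dec a0 a).
    - apply (edge_up G D s t P HPw e0 a0); auto; try lra; intros; apply Hrg'; auto.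
    - apply (edge_down G D s t P HPw e0 a0); auto; try lra; intros; apply Hrg'; auto. }
  assert (HgS : forall e a, In e S -> 0 <= a <= 1 -> good G D s P (ecurve D e a)).
  { intros e a He Ha. unfold S in He. apply in_app_or in He. destruct He as [He|[<-|He]].
    - apply (walk_down G D s t P HPw S1 u x HS1); auto.
      + subst x. rewrite <- ecurve_tail. apply Hg0; lra.
      + intros; apply Hrg'; auto. apply HinS. unfold S. apply in_or_app; auto.
    - auto.
    - apply (walk_up G D s t P HPw S2 (head e0) w HS2); auto.
      + rewrite <- ecurve_head. apply Hg0; lra.
      + intros; apply Hrg'; auto. apply HinS. unfold S. apply in_or_app; simpl; auto. }
  assert (Huw : snd (vpos D u) < snd (vpos D w)).
  { pose proof (walk_h G D u x S1 HS1) as [H1 _]. pose proof (walk_h G D _ w S2 HS2) as [H2 _].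
    pose proof (tail_head_h G D e0). subst x. lra. }
  destruct (split_at_vert G s t w P HPw Hw) as [Pw [Pb [EP [HPw1 HPb]]]].
  assert (HuPw : In u (walk_verts s Pw)).
  { unfold onP in HonPu. rewrite EP, verts_app in HonPu. apply in_app_or in HonPu.
    destruct HonPu as [H|H]; auto. exfalso. apply in_map_iff in H. destruct H as [e [Eh He]].
    pose proof (walk_head_gt G D w t Pb e HPb He). rewrite Eh in H. lra. }
  destruct (split_at_vert G s w u Pw HPw1 HuPw) as [Pa [Pm [EPw [HPa HPm]]]].
  assert (EP2 : P = Pa ++ Pm ++ Pb) by (rewrite EP, EPw, <- app_assoc; auto).
  assert (HvP : walk_verts s P = walk_verts s Pa ++ map (@head G) Pm ++ map (@head G) Pb).
  { rewrite EP2, verts_app, map_app. auto. }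
  assert (HvP' : walk_verts s P' = walk_verts s A ++ map (@head G) S ++ map (@head G) B).
  { rewrite EP'2, verts_app, map_app. auto. }
  assert (HinP : forall e, In e Pa \/ In e Pb -> In e P).
  { intros e [He|He]; rewrite EP2; apply in_or_app; [left|right; apply in_or_app; right]; auto. }
  assert (HSh : forall e, In e S -> head e = w \/ ~ onP G s P (head e)).
  { intros e He. unfold S in He. apply in_app_or in He. destruct He as [He|[<-|He]].
    - right; auto.
    - destruct S2 as [|e2 S2']; simpl in HS2; [left; auto|].
      right. destruct HS2 as [Ht2 _]. rewrite <- Ht2. apply HS2t. simpl; auto.
    - apply (heads_cls G s P S2 (head e0) w HS2 HS2t e He). }
  exists (Pa ++ S ++ Pb). split; [split|split].
  - apply (walk_app G s u t); auto. apply (walk_app G u w t); auto.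
  - rewrite verts_app, map_app.
    assert (N1 : NoDup (walk_verts s Pa)) by (rewrite HvP in HPn; apply NoDup_app_remove_r in HPn; auto).
    assert (N3 : NoDup (map (@head G) Pb)) by (rewrite HvP in HPn; apply NoDup_app_remove_l, NoDup_app_remove_l in HPn; auto).
    assert (N2 : NoDup (map (@head G) S)) by (rewrite HvP' in HP'n; apply NoDup_app_remove_l, NoDup_app_remove_r in HP'n; auto).
    assert (HPbh : forall v, In v (map (@head G) Pb) -> onP G s P v /\ snd (vpos D w) < snd (vpos D v)).
    { intros v Hv. apply in_map_iff in Hv. destruct Hv as [e [<- He]]. split.
      - apply (inP_head G s t P HPw). auto.
      - apply (walk_head_gt G D w t Pb e HPb He). }
    assert (HSv : forall v, In v (map (@head G) S) -> v = w \/ ~ onP G s P v).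
    { intros v Hv. apply in_map_iff in Hv. destruct Hv as [e [<- He]]. auto. }
    apply NoDup_app; auto.
    + apply NoDup_app; auto.
      intros v Hv1 Hv2. destruct (HPbh v Hv2) as [Ho Hh]. destruct (HSv v Hv1) as [->|Hn]; [lra|auto].
    + intros v Hv1 Hv2. pose proof (verts_le G D s u Pa v HPa Hv1) as Hh.
      assert (Ho : onP G s P v).
      { unfold onP. rewrite HvP. apply in_or_app. auto. }
      apply in_app_or in Hv2. destruct Hv2 as [Hv2|Hv2].
      * destruct (HSv v Hv2) as [->|Hn]; [lra|auto].
      * destruct (HPbh v Hv2). lra.
  - intros q [Eq|[e [He [a [Ha Eq]]]]].
    + left. left. auto.
    + apply in_app_or in He. destruct He as [He|He].
      { left. right. exists e. split; [apply HinP; auto|]. exists a; auto. }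
      apply in_app_or in He. destruct He as [He|He].
      2: { left. right. exists e. split; [apply HinP; auto|]. exists a; auto. }
      subst q. destruct (HgS e a He Ha) as [Hq|Hq]; [left; exact Hq|right].
      split; [|exact Hq].
      destruct (Hrg' e a (HinS e He) Ha). unfold Rmin, Rmax.
      destruct (Rle_dec (snd (vpos D s)) (snd (vpos D t))); lra.
  - exists (ecurve D e0 a0). split.
    + right. exists e0. split; [|exists a0; auto].
      apply in_or_app. right. apply in_or_app. left. unfold S. apply in_or_app. simpl; auto.
    + split; auto.
Qed.
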